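(* $SN_{d\beta}=ISN_{d\beta}$, i.e. a term $t\in\mathtt T_J$ is strongly normalizing for $\to_{d\beta}$ if and only if $t\in ISN_{d\beta}$.
   Context: Terms $\mathtt T_J$: $t,u,r ::= x \mid \lambda x.t \mid t(u,y.r)$ ($y$ bound in $r$), up to $\alpha$-equivalence; $\{u/x\}t$ capture-avoiding substitution. List contexts $\mathtt D ::= \Diamond \mid t(u,y.\mathtt D)$. Distant beta: $\mathtt D\langle\lambda x.t\rangle(u,y.r) \mapsto_{d\beta} \{\{u/x\}\mathtt D\langle t\rangle/y\}r$ (variables bound by $\mathtt D$ not free in $u$, $x$ not in $\mathtt D$), $\to_{d\beta}$ its closure under all contexts; $SN_{d\beta}$ is the set of terms with no infinite $\to_{d\beta}$-sequence. Neutral terms $\mathtt n ::= x \mid \mathtt n(u,y.\mathtt n)$; answers $\mathtt a ::= \lambda x.t \mid \mathtt n(u,y.\mathtt a)$; neutral list contexts $\mathtt D_n ::= \Diamond \mid \mathtt n(u,y.\mathtt D_n)$; weak-head contexts $\mathtt W ::= \Diamond \mid \mathtt W(u,y.r) \mid \mathtt n(u,y.\mathtt W)$. $ISN_{d\beta}$ is the smallest set of terms closed under the rules: (snvar) $x\in ISN_{d\beta}$; (snabs) if $t\in ISN_{d\beta}$ then $\lambda x.t\in ISN_{d\beta}$; (snapp) if $\mathtt n,u,r\in ISN_{d\beta}$ with $\mathtt n$ neutral and $r\in\mathtt n\cup\mathtt a$, then $\mathtt n(u,y.r)\in ISN_{d\beta}$; (snbeta) if $\mathtt W\langle\{\{u/x\}\mathtt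 D_n\langle s\rangle/y\}r\rangle\in ISN_{d\beta}$, $\mathtt D_n\langle s\rangle\in ISN_{d\beta}$ and $u\in ISN_{d\beta}$, then $\mathtt W\langle\mathtt D_n\langle\lambda x.s\rangle(u,y.r)\rangle\in ISN_{d\beta}$. *)

(* Defs.v *)
(* Terms of the lambda-calculus with generalized applications
   (Lambda J), represented with de Bruijn indices so that terms are
   identified up to alpha-equivalence. *)
From Stdlib Require Import Arith List.

Inductive term : Type :=
| Var : nat -> term
| Lam : term -> term
| App : term -> term -> term -> term. (* t(u, y.r) : binds index 0 in r *)

Fixpoint shift (d c : nat) (t : term) : term :=
  match t with
  | Var n => if Nat.ltb n c then Var n else Var (n + d)
  | Lam b => Lam (shift d (S c) b)
  | App t1 u r => App (shift d c t1) (shift d c u) (shift d (S c) r)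
  end.

(* subst j s t : capture-avoiding substitution of s (living outside the j
   enclosing binders) for index j in t; indices above j are decremented. *)
Fixpoint subst (j : nat) (s : term) (t : term) : term :=
  match t with
  | Var n => if Nat.ltb n j then Var n
             else if Nat.eqb n j then shift j 0 s else Var (n - 1)
  | Lam b => Lam (subst (S j) s b)
  | App t1 u r => App (subst j s t1) (subst j s u) (subst (S j) s r)
  end.

(* List contexts D ::= Hole | t(u, y.D)   (the hole is under the y binder) *)
Inductive lctx : Type :=
| LHole : lctx
| LApp : term -> term -> lctx -> lctx.

Fixpoint lplug (D : lctx) (s : term) : term :=
  match D with
  | LHole => s
  | LApp t u D' => App t u (lplug D' s)
  end.

Fixpoint ldepth (D : lctx) : nat :=
  match D with LHole => 0 | LApp _ _ D' => S (ldepth D') end.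

Fixpoint lshift (d c : nat) (D : lctx) : lctx :=
  match D with
  | LHole => LHole
  | LApp t u D' => LApp (shift d c t) (shift d c u) (lshift d (S c) D')
  end.

(* {u/x} D<t>  where x is index 0 of t (bound by the removed lambda),
   t lives under the binders of D, and u must not be captured by D. *)
Definition dsubst (D : lctx) (t u : term) : term :=
  lplug D (subst 0 (shift (ldepth D) 0 u) t).

(* D<t> where x (index 0 of t, the variable of the removed lambda) becomes
   a fresh free variable (the new outermost free index 0). *)
Definition dopen (D : lctx) (t : term) : term :=
  lplug (lshift 1 0 D) (subst 0 (Var (ldepth D)) (shift 1 (S (ldepth D)) t)).

Inductive step : term -> term -> Prop :=
| step_dbeta : forall D t u r,
    step (App (lplug D (Lam t)) u r) (subst 0 (dsubst D t u) r)
| step_lam : forall t t', step t t' -> step (Lam t) (Lam t')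
| step_app1 : forall t t' u r, step t t' -> step (App t u r) (App t' u r)
| step_app2 : forall t u u' r, step u u' -> step (App t u r) (App t u' r)
| step_app3 : forall t u r r', step r r' -> step (App t u r) (App t u r').

Definition SN (t : term) : Prop :=
  ~ (exists f : nat -> term, f 0 = t /\ forall n, step (f n) (f (S n))).

Inductive neutral : term -> Prop :=
| ne_var : forall x, neutral (Var x)
| ne_app : forall n u n', neutral n -> neutral n' -> neutral (App n u n').

Inductive answer : term -> Prop :=
| ans_lam : forall t, answer (Lam t)
| ans_app : forall n u a, neutral n -> answer a -> answer (App n u a).

Inductive neutral_lctx : lctx -> Prop :=
| nl_hole : neutral_lctx LHole
| nl_app : forall n u D, neutral n -> neutral_lctx D -> neutral_lctx (LApp n u D).

Inductive wctx : Type :=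
| WHole : wctx
| WLeft : wctx -> term -> term -> wctx
| WRight : term -> term -> wctx -> wctx.

Fixpoint wplug (W : wctx) (s : term) : term :=
  match W with
  | WHole => s
  | WLeft W' u r => App (wplug W' s) u r
  | WRight n u W' => App n u (wplug W' s)
  end.

Inductive weak_head : wctx -> Prop :=
| wh_hole : weak_head WHole
| wh_left : forall W u r, weak_head W -> weak_head (WLeft W u r)
| wh_right : forall n u W, neutral n -> weak_head W -> weak_head (WRight n u W).

Inductive ISN : term -> Prop :=
| snvar : forall x, ISN (Var x)
| snabs : forall t, ISN t -> ISN (Lam t)
| snapp : forall n u r, neutral n -> ISN n -> ISN u -> ISN r ->
    (neutral r \/ answer r) -> ISN (App n u r)
| snbeta : forall W D s u r, weak_head W -> neutral_lctx D ->
    ISN (wplug W (subst 0 (dsubst D s u) r)) ->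
    ISN (dopen D s) ->
    ISN u ->
    ISN (wplug W (App (lplug D (Lam s)) u r)).

(* Main.v *)
Require Import Defs.
From Stdlib Require Import Arith Lia List Classical ClassicalEpsilon.

Definition upr (r : nat -> nat) : nat -> nat :=
  fun n => match n with 0 => 0 | S m => S (r m) end.

Fixpoint ren (r : nat -> nat) (t : term) : term :=
  match t with
  | Var n => Var (r n)
  | Lam b => Lam (ren (upr r) b)
  | App a b c => App (ren r a) (ren r b) (ren (upr r) c)
  end.

Definition ups (s : nat -> term) : nat -> term :=
  fun n => match n with 0 => Var 0 | S m => ren S (s m) end.

Fixpoint psub (s : nat -> term) (t : term) : term :=
  match t with
  | Var n => s n
  | Lam b => Lam (psub (ups s) b)
  | App a b c => App (psub s a) (psub s b) (psub (ups s) c)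
  end.

Definition scons (x : term) (s : nat -> term) : nat -> term :=
  fun n => match n with 0 => x | S m => s m end.

Lemma ren_ext : forall t r r', (forall n, r n = r' n) -> ren r t = ren r' t.
Proof.
  induction t; intros r r' H; simpl; f_equal; auto;
  first [apply IHt | apply IHt3]; intros [|n]; simpl; auto.
Qed.

Lemma psub_ext : forall t s s', (forall n, s n = s' n) -> psub s t = psub s' t.
Proof.
  induction t; intros s s' H; simpl; f_equal; auto;
  first [apply IHt | apply IHt3]; intros [|n]; simpl; auto; rewrite H; auto.
Qed.

Lemma ren_ren : forall t r r', ren r (ren r' t) = ren (fun n => r (r' n)) t.
Proof.
  induction t; intros r r'; simpl; f_equal; auto;
  [rewrite IHt | rewrite IHt3]; apply ren_ext; intros [|n]; reflexivity.
Qed.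

Lemma ren_psub_var : forall t r, ren r t = psub (fun n => Var (r n)) t.
Proof.
  induction t; intros r; simpl; f_equal; auto;
  [rewrite IHt | rewrite IHt3]; apply psub_ext; intros [|n]; reflexivity.
Qed.

Lemma psub_ren : forall t s r, psub s (ren r t) = psub (fun n => s (r n)) t.
Proof.
  induction t; intros s r; simpl; f_equal; auto;
  [rewrite IHt | rewrite IHt3]; apply psub_ext; intros [|n]; reflexivity.
Qed.

Lemma ren_psub : forall t s r, ren r (psub s t) = psub (fun n => ren r (s n)) t.
Proof.
  induction t; intros s r; simpl; f_equal; auto;
  [rewrite IHt | rewrite IHt3]; apply psub_ext; intros [|n]; simpl; auto;
  rewrite !ren_ren; apply ren_ext; intros; reflexivity.
Qed.

Lemma psub_psub : forall t s s', psub s (psub s' t) = psub (fun n => psub s (s' n)) t.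
Proof.
  induction t; intros s s'; simpl; f_equal; auto;
  [rewrite IHt | rewrite IHt3]; apply psub_ext; intros [|n]; simpl; auto;
  rewrite psub_ren, ren_psub; apply psub_ext; intros; reflexivity.
Qed.

Lemma psub_id : forall t, psub Var t = t.
Proof.
  induction t; simpl; f_equal; auto;
  [rewrite <- IHt at 2 | rewrite <- IHt3 at 2]; apply psub_ext; intros [|n]; reflexivity.
Qed.

Lemma ren_id : forall t, ren (fun n => n) t = t.
Proof. intros; rewrite ren_psub_var; apply psub_id. Qed.

Ltac nsplit := repeat match goal with
  | |- context [Nat.ltb ?a ?b] => destruct (Nat.ltb_spec a b)
  | |- context [Nat.eqb ?a ?b] => destruct (Nat.eqb_spec a b)
  | |- context [Nat.leb ?a ?b] => destruct (Nat.leb_spec a b)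
  end.
Definition shr (d c : nat) : nat -> nat := fun n => if Nat.ltb n c then n else n + d.

Definition sbs (j : nat) (s : term) : nat -> term :=
  fun n => if Nat.ltb n j then Var n else if Nat.eqb n j then shift j 0 s else Var (n - 1).
Ltac ncase := unfold shr, upr, sbs, scons in *; simpl; nsplit; simpl; try reflexivity; try (f_equal; lia); try lia.

Lemma shift_ren : forall t d c, shift d c t = ren (shr d c) t.
Proof.
  induction t; intros d c; simpl; auto.
  - ncase.
  - f_equal; rewrite IHt; apply ren_ext; intros [|n]; ncase.
  - f_equal; auto. rewrite IHt3; apply ren_ext; intros [|n]; ncase.
Qed.

Lemma shift0 : forall t c, shift 0 c t = t.
Proof.
  intros; rewrite shift_ren; rewrite <- (ren_id t) at 2; apply ren_ext.
  intros; ncase.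
Qed.

Lemma subst_psub : forall t j s, subst j s t = psub (sbs j s) t.
Proof.
  induction t; intros j s; simpl; auto.
  - f_equal; rewrite IHt; apply psub_ext; intros [|n]; unfold ups; ncase;
    rewrite !shift_ren, ren_ren; apply ren_ext; intros; ncase.
  - f_equal; auto. rewrite IHt3; apply psub_ext; intros [|n]; unfold ups; ncase;
    rewrite !shift_ren, ren_ren; apply ren_ext; intros; ncase.
Qed.

Lemma subst0 : forall t x, subst 0 x t = psub (scons x Var) t.
Proof.
  intros; rewrite subst_psub; apply psub_ext; intros [|n]; ncase.
  rewrite shift0; auto.
Qed.

Fixpoint uprn d r := match d with 0 => r | S d => upr (uprn d r) end.
Fixpoint upsn d s := match d with 0 => s | S d => ups (upsn d s) end.
Fixpoint lren r D := match D with LHole => LHole | LApp t u D' => LApp (ren r t) (ren r u) (lren (upr r) D') end.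
Fixpoint lps s D := match D with LHole => LHole | LApp t u D' => LApp (psub s t) (psub s u) (lps (ups s) D') end.

Lemma uprn_upr : forall d r, uprn d (upr r) = uprn (S d) r.
Proof. induction d; intros; simpl; auto. rewrite IHd; reflexivity. Qed.
Lemma upsn_ups : forall d s, upsn d (ups s) = upsn (S d) s.
Proof. induction d; intros; simpl; auto. rewrite IHd; reflexivity. Qed.
Lemma ldepth_lren : forall D r, ldepth (lren r D) = ldepth D.
Proof. induction D; intros; simpl; auto. Qed.
Lemma ldepth_lps : forall D s, ldepth (lps s D) = ldepth D.
Proof. induction D; intros; simpl; auto. Qed.

Lemma ren_lplug : forall D r X, ren r (lplug D X) = lplug (lren r D) (ren (uprn (ldepth D) r) X).
Proof. induction D; intros; simpl; auto. rewrite IHD, uprn_upr; reflexivity. Qed.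
Lemma psub_lplug : forall D s X, psub s (lplug D X) = lplug (lps s D) (psub (upsn (ldepth D) s) X).
Proof. induction D; intros; simpl; auto. rewrite IHD, upsn_ups; reflexivity. Qed.

Lemma lren_ext : forall D r r', (forall n, r n = r' n) -> lren r D = lren r' D.
Proof.
  induction D; intros r r' H; simpl; auto. f_equal; try (apply ren_ext; auto).
  apply IHD; intros [|n]; simpl; auto.
Qed.
Lemma lps_ext : forall D s s', (forall n, s n = s' n) -> lps s D = lps s' D.
Proof.
  induction D; intros s s' H; simpl; auto. f_equal; try (apply psub_ext; auto).
  apply IHD; intros [|n]; simpl; auto. rewrite H; auto.
Qed.
Lemma lren_lps_var : forall D r, lren r D = lps (fun n => Var (r n)) D.
Proof.
  induction D; intros; simpl; auto. rewrite !ren_psub_var, IHD. f_equal.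
  apply lps_ext; intros [|n]; reflexivity.
Qed.
Lemma upsn_var : forall d r n, upsn d (fun k => Var (r k)) n = Var (uprn d r n).
Proof. induction d; intros; simpl; auto. destruct n; simpl; auto. rewrite IHd; reflexivity. Qed.
Lemma ren_upsn : forall d r t, psub (upsn d (fun k => Var (r k))) t = ren (uprn d r) t.
Proof. intros; rewrite ren_psub_var; apply psub_ext; intros; apply upsn_var. Qed.

Lemma lshift_lren : forall D d c, lshift d c D = lren (shr d c) D.
Proof.
  induction D; intros; simpl; auto. rewrite !shift_ren, IHD. f_equal.
  apply lren_ext; intros [|n]; ncase.
Qed.

Lemma S0 : forall p s Y, psub s (subst 0 Y p) = subst 0 (psub s Y) (psub (ups s) p).
Proof.
  intros; rewrite !subst0, !psub_psub; apply psub_ext; intros [|n]; simpl; auto.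
  rewrite psub_ren; rewrite <- (psub_id (s n)) at 1; apply psub_ext; reflexivity.
Qed.

Lemma upsn_shift : forall d s n, upsn d s (n + d) = ren (fun k => k + d) (s n).
Proof.
  induction d; intros; simpl.
  - replace (n + 0) with n by lia; transitivity (ren (fun k => k) (s n));
    [symmetry; apply ren_id | apply ren_ext; intros; lia].
  - replace (n + S d) with (S (n + d)) by lia. simpl. rewrite IHd, ren_ren.
    apply ren_ext; intros; lia.
Qed.

Lemma psub_shift : forall d s u, psub (upsn d s) (shift d 0 u) = shift d 0 (psub s u).
Proof.
  intros. rewrite !shift_ren, psub_ren, ren_psub. apply psub_ext; intros n.
  unfold shr; simpl. rewrite upsn_shift. apply ren_ext; intros; ncase.
Qed.

Lemma DS : forall D s p u,
  psub s (dsubst D p u) = dsubst (lps s D) (psub (upsn (S (ldepth D)) s) p) (psub s u).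
Proof.
  intros; unfold dsubst. rewrite psub_lplug, S0, psub_shift, ldepth_lps. reflexivity.
Qed.

Lemma shift_shift : forall t d, shift d 0 (shift 1 0 t) = shift (S d) 0 t.
Proof. intros; rewrite !shift_ren, ren_ren; apply ren_ext; intros; ncase. Qed.

Lemma E1 : forall t v D p u, dsubst (LApp t v D) p u = App t v (dsubst D p (shift 1 0 u)).
Proof. intros; unfold dsubst; simpl. rewrite shift_shift. reflexivity. Qed.

Lemma shift1 : forall t, shift 1 0 t = ren S t.
Proof. intros; rewrite shift_ren; apply ren_ext; intros; ncase. Qed.

Lemma cancel : forall x t, psub (scons x Var) (ren S t) = t.
Proof. intros; rewrite psub_ren; apply psub_id. Qed.

Lemma psub_ans : forall D s p,
  psub s (lplug D (Lam p)) = lplug (lps s D) (Lam (psub (upsn (S (ldepth D)) s) p)).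
Proof. intros; rewrite psub_lplug; reflexivity. Qed.

Lemma ren_ans : forall D r p,
  ren r (lplug D (Lam p)) = lplug (lren r D) (Lam (ren (uprn (S (ldepth D)) r) p)).
Proof. intros; rewrite ren_lplug; reflexivity. Qed.

Lemma ren_subst0 : forall p r Y, ren r (subst 0 Y p) = subst 0 (ren r Y) (ren (upr r) p).
Proof.
  intros; rewrite !ren_psub_var, S0. f_equal. apply psub_ext; intros [|n]; reflexivity.
Qed.

Lemma ren_dsubst : forall D r p u,
  ren r (dsubst D p u) = dsubst (lren r D) (ren (uprn (S (ldepth D)) r) p) (ren r u).
Proof.
  intros. rewrite ren_psub_var, DS, lren_lps_var, ren_upsn, <- ren_psub_var. reflexivity.
Qed.

Lemma step_psub : forall t t', step t t' -> forall s, step (psub s t) (psub s t').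
Proof.
  induction 1; intros s; simpl; try (constructor; auto; fail).
  rewrite psub_ans, S0, DS. apply step_dbeta.
Qed.

Lemma step_ren : forall t t' r, step t t' -> step (ren r t) (ren r t').
Proof. intros; rewrite !ren_psub_var; apply step_psub; auto. Qed.

Lemma ren_inv_ans : forall D a r p, ren r a = lplug D (Lam p) ->
  exists D0 p0, a = lplug D0 (Lam p0) /\ D = lren r D0 /\ p = ren (uprn (S (ldepth D0)) r) p0.
Proof.
  induction D; intros a r p H; destruct a; simpl in H; try discriminate; inversion H; subst.
  - exists LHole, a; simpl; auto.
  - destruct (IHD a3 (upr r) p H3) as [D0 [p0 [E1 [E2 E3]]]]; subst.
    exists (LApp a1 a2 D0), p0; simpl; repeat split; auto.
    rewrite uprn_upr; reflexivity.
Qed.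

Lemma step_ren_inv : forall t r Y, step (ren r t) Y -> exists t', step t t' /\ Y = ren r t'.
Proof.
  induction t; intros r Y H; simpl in H.
  - inversion H.
  - inversion H; subst. destruct (IHt _ _ H1) as [t1 [S1 E1]]; subst.
    exists (Lam t1); split; [constructor; auto | reflexivity].
  - inversion H; subst.
    + symmetry in H1. destruct (ren_inv_ans _ _ _ _ H1) as [D0 [p0 [E1 [E2 E3]]]]; subst.
      exists (subst 0 (dsubst D0 p0 t2) t3); split; [apply step_dbeta|].
      rewrite ren_subst0, ren_dsubst; reflexivity.
    + destruct (IHt1 _ _ H4) as [x [S1 E1]]; subst. exists (App x t2 t3); split; [constructor; auto | reflexivity].
    + destruct (IHt2 _ _ H4) as [x [S1 E1]]; subst. exists (App t1 x t3); split; [constructor; auto | reflexivity].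
    + destruct (IHt3 _ _ H4) as [x [S1 E1]]; subst. exists (App t1 t2 x); split; [constructor; auto | reflexivity].
Qed.

Lemma neutral_not_ans : forall D p n, neutral n -> n = lplug D (Lam p) -> False.
Proof.
  induction D; intros p n Hn E; simpl in E; subst; inversion Hn; subst. eapply IHD; eauto.
Qed.

Lemma neutral_step : forall n n', neutral n -> step n n' -> neutral n'.
Proof.
  intros n n' Hn; revert n'; induction Hn; intros m Hs; inversion Hs; subst.
  - exfalso; exact (neutral_not_ans _ _ _ Hn1 eq_refl).
  - constructor; auto.
  - constructor; auto.
  - constructor; auto.
Qed.

Lemma neutral_ren : forall n r, neutral n -> neutral (ren r n).
Proof. intros n r H; revert r; induction H; intros; simpl; constructor; auto. Qed.

Lemma nl_lren : forall D r, neutral_lctx D -> neutral_lctx (lren r D).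
Proof. intros D r H; revert r; induction H; intros; simpl; constructor; auto. apply neutral_ren; auto. Qed.

Lemma ans_inj : forall D1 D2 s1 s2, lplug D1 (Lam s1) = lplug D2 (Lam s2) -> D1 = D2 /\ s1 = s2.
Proof.
  induction D1; destruct D2; intros; simpl in H; try discriminate.
  - inversion H; auto.
  - inversion H; subst. destruct (IHD1 _ _ _ H3); subst; auto.
Qed.

Inductive lstep : lctx -> lctx -> Prop :=
| ls1 : forall t t' u D, step t t' -> lstep (LApp t u D) (LApp t' u D)
| ls2 : forall t u u' D, step u u' -> lstep (LApp t u D) (LApp t u' D)
| ls3 : forall t u D D', lstep D D' -> lstep (LApp t u D) (LApp t u D').

Lemma lstep_plug : forall D D' X, lstep D D' -> step (lplug D X) (lplug D' X).
Proof. induction 1; simpl; constructor; auto. Qed.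
Lemma lstep_nl : forall D D', neutral_lctx D -> lstep D D' -> neutral_lctx D'.
Proof.
  intros D D' H1 H2; revert H1; induction H2; intros H1; inversion H1; subst; constructor; auto.
  eapply neutral_step; eauto.
Qed.
Lemma lstep_depth : forall D D', lstep D D' -> ldepth D' = ldepth D.
Proof. induction 1; simpl; auto. Qed.
Lemma lstep_ren : forall D D' r, lstep D D' -> lstep (lren r D) (lren r D').
Proof. intros D D' r H; revert r; induction H; intros; simpl; constructor; auto; apply step_ren; auto. Qed.
Lemma lstep_ren_inv : forall D r D3, lstep (lren r D) D3 -> exists D2, lstep D D2 /\ D3 = lren r D2.
Proof.
  induction D; intros r D3 H; simpl in H; inversion H; subst.
  - destruct (step_ren_inv _ _ _ H4) as [x [S1 E]]; subst. exists (LApp x t0 D); split; [constructor; auto|reflexivity].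
  - destruct (step_ren_inv _ _ _ H4) as [x [S1 E]]; subst. exists (LApp t x D); split; [constructor; auto|reflexivity].
  - destruct (IHD _ _ H4) as [x [S1 E]]; subst. exists (LApp t t0 x); split; [constructor; auto|reflexivity].
Qed.

Lemma Lstep : forall D X Y, neutral_lctx D -> step (lplug D X) Y ->
  (exists D2, lstep D D2 /\ Y = lplug D2 X) \/ (exists X2, step X X2 /\ Y = lplug D X2).
Proof.
  induction D; intros X Y HD H; simpl in *.
  - right; eauto.
  - inversion HD; subst. inversion H; subst.
    + exfalso; match goal with Hn : neutral (lplug _ _) |- _ => exact (neutral_not_ans _ _ _ Hn eq_refl) end.
    + left; eexists; split; [apply ls1; eauto | reflexivity].
    + left; eexists; split; [apply ls2; eauto | reflexivity].
    + match goal with Hl : neutral_lctx D, Hs : step (lplug D X) _ |- _ => destruct (IHD _ _ Hl Hs) as [[D2 [S1 E]] | [X2 [S1 E]]] end; subst.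
      * left; eexists; split; [apply ls3; eauto | reflexivity].
      * right; eexists; split; eauto.
Qed.

Lemma step_lplug : forall D X X', step X X' -> step (lplug D X) (lplug D X').
Proof. induction D; intros; simpl; auto. constructor; auto. Qed.

Inductive star : term -> term -> Prop :=
| st_refl : forall t, star t t
| st_step : forall a b c, step a b -> star b c -> star a c.
Inductive plus : term -> term -> Prop :=
| pl1 : forall a b, step a b -> plus a b
| plS : forall a b c, step a b -> plus b c -> plus a c.

Lemma star_trans : forall a b c, star a b -> star b c -> star a c.
Proof. intros a b c H; revert c; induction H; intros; auto. econstructor; eauto. Qed.
Lemma star_one : forall a b, step a b -> star a b.
Proof. intros; econstructor; eauto; constructor. Qed.
Lemma star_cases : forall a b, star a b -> a = b \/ plus a b.
Proof.
  induction 1; auto. right. destruct IHstar; subst; [apply pl1; auto | eapply plS; eauto].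
Qed.
Lemma plus_star : forall a b, plus a b -> star a b.
Proof. induction 1; econstructor; eauto; constructor. Qed.

Lemma star_ctx : forall (f : term -> term), (forall x y, step x y -> step (f x) (f y)) ->
  forall a b, star a b -> star (f a) (f b).
Proof. intros f Hf a b H; induction H; [constructor | econstructor; eauto]. Qed.
Lemma plus_ctx : forall (f : term -> term), (forall x y, step x y -> step (f x) (f y)) ->
  forall a b, plus a b -> plus (f a) (f b).
Proof. intros f Hf a b H; induction H; [apply pl1 | eapply plS]; eauto. Qed.

Lemma star_app : forall a a' b b' c c', star a a' -> star b b' -> star c c' -> star (App a b c) (App a' b' c').
Proof.
  intros. apply star_trans with (App a' b c).
  { apply (star_ctx (fun x => App x b c)); auto; intros; constructor; auto. }
  apply star_trans with (App a' b' c).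
  { apply (star_ctx (fun x => App a' x c)); auto; intros; constructor; auto. }
  apply (star_ctx (fun x => App a' b' x)); auto; intros; constructor; auto.
Qed.
Lemma star_lam : forall a a', star a a' -> star (Lam a) (Lam a').
Proof. intros; apply (star_ctx Lam); auto; intros; constructor; auto. Qed.

Lemma star_psub_arg : forall t s s', (forall n, star (s n) (s' n)) -> star (psub s t) (psub s' t).
Proof.
  induction t; intros s s' H; simpl; auto.
  - apply star_lam, IHt. intros [|n]; simpl; [constructor|].
    apply (star_ctx (ren S)); auto; intros; apply step_ren; auto.
  - apply star_app; auto. apply IHt3. intros [|n]; simpl; [constructor|].
    apply (star_ctx (ren S)); auto; intros; apply step_ren; auto.
Qed.

Fixpoint bnd (n : nat) (t : term) : Prop :=
  match n with
  | 0 => forall t', ~ step t t'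
  | S m => forall t', step t t' -> bnd m t'
  end.

Lemma bnd_S : forall n t, bnd n t -> bnd (S n) t.
Proof.
  induction n; intros t H; simpl in *; intros t' Hs.
  - exfalso; eapply H; eauto.
  - apply IHn; auto.
Qed.
Lemma bnd_le : forall n m t, n <= m -> bnd n t -> bnd m t.
Proof. intros n m t Hle; induction Hle; auto; intros; apply bnd_S; auto. Qed.
Lemma bnd_step : forall n t t', bnd n t -> step t t' -> exists m, n = S m /\ bnd m t'.
Proof. intros [|n] t t' H Hs; simpl in H; [exfalso; eapply H; eauto | eauto]. Qed.
Lemma bnd_ren : forall n t r, bnd n t -> bnd n (ren r t).
Proof.
  induction n; intros t r H; simpl in *; intros Y HY;
  destruct (step_ren_inv _ _ _ HY) as [t' [S1 E]]; subst.
  - eapply H; eauto.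
  - apply IHn; auto.
Qed.
Lemma bnd_ctx : forall (f : term -> term), (forall x y, step x y -> step (f x) (f y)) ->
  forall n t, bnd n (f t) -> bnd n t.
Proof.
  intros f Hf; induction n; intros t H; simpl in *; intros t' Hs.
  - eapply H; eauto.
  - apply IHn; auto.
Qed.

Inductive sn : term -> Prop := sn_i : forall t, (forall t', step t t' -> sn t') -> sn t.

Lemma bnd_sn : forall n t, bnd n t -> sn t.
Proof.
  induction n; intros t H; constructor; intros t' Hs; simpl in H.
  - exfalso; eapply H; eauto.
  - apply IHn; auto.
Qed.

Lemma sn_acc : forall t, sn t -> Acc (fun a b => plus b a) t.
Proof.
  induction 1 as [t H IH]. constructor; intros y Hp.
  inversion Hp; subst; auto. specialize (IH _ H0). eapply Acc_inv; eauto.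
Qed.

Definition bcons (b : bool) (I : nat -> bool) : nat -> bool :=
  fun n => match n with 0 => b | S m => I m end.

Fixpoint allfree (I : nat -> bool) (t : term) : Prop :=
  match t with
  | Var n => I n = true
  | Lam a => allfree (bcons true I) a
  | App a b c => allfree I a /\ allfree I b /\ allfree (bcons true I) c
  end.

Lemma allfree_true : forall t I, (forall n, I n = true) -> allfree I t.
Proof.
  induction t; intros I H; simpl; auto; repeat split; auto;
  [apply IHt | apply IHt3]; intros [|n]; simpl; auto.
Qed.

Lemma allfree_ren : forall t I J r, allfree I t -> (forall n, I n = true -> J (r n) = true) -> allfree J (ren r t).
Proof.
  induction t; intros I J r H HIJ; simpl in *; auto.
  - eapply IHt; eauto. intros [|n]; simpl; auto.
  - destruct H as [H1 [H2 H3]]; repeat split; eauto.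
    eapply IHt3; eauto. intros [|n]; simpl; auto.
Qed.

Lemma allfree_psub : forall t I J s, allfree I t -> (forall n, I n = true -> allfree J (s n)) -> allfree J (psub s t).
Proof.
  induction t; intros I J s H HIJ; simpl in *; auto.
  - eapply IHt; eauto. intros [|n]; simpl; auto. intros Hn.
    eapply allfree_ren; eauto.
  - destruct H as [H1 [H2 H3]]; repeat split; eauto.
    eapply IHt3; eauto. intros [|n]; simpl; auto. intros Hn.
    eapply allfree_ren; eauto.
Qed.

Lemma psub_ext_af : forall t I s s', allfree I t -> (forall n, I n = true -> s n = s' n) -> psub s t = psub s' t.
Proof.
  induction t; intros I s s' H HE; simpl in *; auto.
  - f_equal; eapply IHt; eauto. intros [|n]; simpl; auto. intros Hn; rewrite HE; auto.
  - destruct H as [H1 [H2 H3]]; f_equal; eauto.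
    eapply IHt3; eauto. intros [|n]; simpl; auto. intros Hn; rewrite HE; auto.
Qed.

Lemma allfree_dsubst : forall D I p u, allfree I (lplug D (Lam p)) -> allfree I u -> allfree I (dsubst D p u).
Proof.
  induction D; intros I p u H Hu.
  - unfold dsubst; simpl in *. rewrite shift0, subst0. eapply allfree_psub; eauto.
    intros [|n]; simpl; auto.
  - rewrite E1. simpl in *. destruct H as [H1 [H2 H3]]; repeat split; auto.
    apply IHD; auto. rewrite shift1. eapply allfree_ren; eauto.
Qed.

Lemma allfree_step : forall t t', step t t' -> forall I, allfree I t -> allfree I t'.
Proof.
  induction 1; intros I H'; simpl in *; try (destruct H' as [H1 [H2 H3]]); repeat split; eauto.
  rewrite subst0. eapply allfree_psub; eauto.
  intros [|n]; simpl; auto. intros; apply allfree_dsubst; auto.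
Qed.

Fixpoint snn (I : nat -> bool) (t : term) : Prop :=
  match t with
  | Var n => I n = true
  | App a b c => snn I a /\ snn (bcons true I) c
  | Lam _ => False
  end.

Lemma snn_neutral : forall t I, snn I t -> neutral t.
Proof. induction t; intros I H; simpl in H; try tauto; constructor; firstorder eauto. Qed.

Lemma neutral_snn : forall t, neutral t -> forall I, (forall n, I n = true) -> snn I t.
Proof.
  induction 1; intros I HI; simpl; auto. split; auto. apply IHneutral2. intros [|k]; simpl; auto.
Qed.

Lemma snn_step : forall n n', step n n' -> forall I, snn I n -> snn I n'.
Proof.
  induction 1; intros I Hn; simpl in *; try tauto.
  - exfalso. destruct Hn as [Hn _]. apply snn_neutral in Hn. exact (neutral_not_ans _ _ _ Hn eq_refl).
  - destruct Hn; split; eauto.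
  - destruct Hn; split; eauto.
Qed.

Lemma snn_ren : forall t I J r, snn I t -> (forall k, I k = true -> J (r k) = true) -> snn J (ren r t).
Proof.
  induction t; intros I J r H HIJ; simpl in *; auto.
  destruct H; split; eauto. eapply IHt3; eauto. intros [|k]; simpl; auto.
Qed.

Lemma snn_psub : forall t I J s, snn I t -> (forall k, I k = true -> exists m, s k = Var m /\ J m = true) -> snn J (psub s t).
Proof.
  induction t; intros I J s H HIJ; simpl in *; auto.
  - destruct (HIJ n H) as [m [E1 E2]]; rewrite E1; simpl; auto.
  - destruct H; split; eauto. eapply IHt3; eauto. intros [|k]; simpl.
    + intros; exists 0; auto.
    + intros Hk; destruct (HIJ k Hk) as [m [E1 E2]]; rewrite E1; simpl; exists (S m); auto.
Qed.

Inductive P : (nat -> bool) -> term -> term -> nat -> Prop :=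
| PVar : forall I n, P I (Var n) (Var n) 0
| PLam : forall I a a' w, P (bcons false I) a a' w -> P I (Lam a) (Lam a') w
| PApp : forall I a a' b b' c c' w1 w2 w3, P I a a' w1 -> P I b b' w2 -> P (bcons false I) c c' w3 ->
    P I (App a b c) (App a' b' c') (w1 + w2 + w3)
| PAppN : forall I a a' b b' c c' w1 w2 w3, snn I a -> P I a a' w1 -> P I b b' w2 -> P (bcons true I) c c' w3 ->
    P I (App a b c) (App a' b' c') (w1 + w2 + w3)
| PCopy : forall I D s u r r' nF nu wr, neutral_lctx D -> allfree I (lplug D (Lam s)) -> allfree I u ->
    bnd nF (lplug D (Lam s)) -> bnd nu u -> P (bcons false I) r r' wr ->
    P I (App (lplug D (Lam s)) u r) (subst 0 (dsubst D s u) r') (S (nF + nu + wr)).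

Lemma P_refl : forall t I, P I t t 0.
Proof.
  induction t; intros I.
  - constructor.
  - constructor; auto.
  - replace 0 with (0 + 0 + 0) by reflexivity. constructor; auto.
Qed.

Lemma P_ren : forall I a a' w, P I a a' w -> forall J r, (forall n, I n = true -> J (r n) = true) ->
  P J (ren r a) (ren r a') w.
Proof.
  induction 1; intros J rho HIJ; simpl.
  - constructor.
  - constructor. apply IHP. intros [|n]; simpl; auto.
  - constructor; auto. apply IHP3. intros [|n]; simpl; auto.
  - apply PAppN; auto. eapply snn_ren; eauto. apply IHP3. intros [|n]; simpl; auto.
  - rewrite ren_ans, ren_subst0, ren_dsubst. apply PCopy.
    + apply nl_lren; auto.
    + rewrite <- ren_ans. eapply allfree_ren; eauto.
    + eapply allfree_ren; eauto.
    + rewrite <- ren_ans. apply bnd_ren; auto.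
    + apply bnd_ren; auto.
    + apply IHP. intros [|n]; simpl; auto.
Qed.

Lemma ups_hyps : forall (I J : nat -> bool) s s' (ws : nat -> nat) b,
  (forall n, I n = true -> exists m, s n = Var m /\ s' n = Var m /\ J m = true) ->
  (forall n, I n = false -> P J (s n) (s' n) (ws n)) ->
  (forall n, bcons b I n = true -> exists m, ups s n = Var m /\ ups s' n = Var m /\ bcons b J m = true) /\
  (forall n, bcons b I n = false -> P (bcons b J) (ups s n) (ups s' n) (match n with 0 => 0 | S k => ws k end)).
Proof.
  intros I J s s' ws b H1 H2; split.
  - intros [|n]; simpl; intros Hn.
    + exists 0; auto.
    + destruct (H1 n Hn) as [m [E1 [E2 E3]]]; rewrite E1, E2; simpl; exists (S m); auto.
  - intros [|n]; simpl; intros Hn.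
    + constructor.
    + eapply P_ren; eauto.
Qed.

Lemma P_psub : forall I a a' w, P I a a' w -> forall J s s' (ws : nat -> nat),
  (forall n, I n = true -> exists m, s n = Var m /\ s' n = Var m /\ J m = true) ->
  (forall n, I n = false -> P J (s n) (s' n) (ws n)) ->
  exists w', P J (psub s a) (psub s' a') w' /\ ((forall n, I n = false -> ws n = 0) -> w' = w).
Proof.
  induction 1; intros J s1 s1' ws Hin Hni; simpl.
  - destruct (I n) eqn:E.
    + destruct (Hin n E) as [m [E1 [E2 E3]]]; rewrite E1, E2. exists 0; split; [constructor|auto].
    + exists (ws n); split; auto.
  - destruct (ups_hyps _ _ _ _ ws false Hin Hni) as [Hu1 Hu2].
    destruct (IHP _ _ _ _ Hu1 Hu2) as [w' [HP' HZ]].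
    exists w'; split; [constructor; auto|]. intros Z; apply HZ. intros [|n]; simpl; auto.
  - destruct (ups_hyps _ _ _ _ ws false Hin Hni) as [Hu1 Hu2].
    destruct (IHP1 _ _ _ _ Hin Hni) as [w1' [HP1' HZ1]].
    destruct (IHP2 _ _ _ _ Hin Hni) as [w2' [HP2' HZ2]].
    destruct (IHP3 _ _ _ _ Hu1 Hu2) as [w3' [HP3' HZ3]].
    exists (w1' + w2' + w3'); split; [constructor; auto|].
    intros Z; rewrite HZ1, HZ2, HZ3; auto. intros [|n]; simpl; auto.
  - destruct (ups_hyps _ _ _ _ ws true Hin Hni) as [Hu1 Hu2].
    destruct (IHP1 _ _ _ _ Hin Hni) as [w1' [HP1' HZ1]].
    destruct (IHP2 _ _ _ _ Hin Hni) as [w2' [HP2' HZ2]].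
    destruct (IHP3 _ _ _ _ Hu1 Hu2) as [w3' [HP3' HZ3]].
    exists (w1' + w2' + w3'); split.
    + apply PAppN; auto. eapply snn_psub; eauto. intros k Hk; destruct (Hin k Hk) as [m [? [? ?]]]; eauto.
    + intros Z; rewrite HZ1, HZ2, HZ3; auto. intros [|n]; simpl; auto.
  - destruct (ups_hyps _ _ _ _ ws false Hin Hni) as [H1' H2'].
    destruct (IHP _ _ _ _ H1' H2') as [w' [HP' HZ]].
    set (rho := fun n => match s1 n with Var m => m | _ => 0 end).
    assert (Es : forall n, I n = true -> s1 n = Var (rho n) /\ s1' n = Var (rho n)).
    { intros n Hn; destruct (Hin n Hn) as [m [E1 [E2 E3]]]; unfold rho; rewrite E1; auto. }
    assert (Hr : forall n, I n = true -> J (rho n) = true).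
    { intros n Hn; destruct (Hin n Hn) as [m [E1 [E2 E3]]]; unfold rho; rewrite E1; auto. }
    assert (EF : psub s1 (lplug D (Lam s)) = ren rho (lplug D (Lam s))).
    { rewrite ren_psub_var. eapply psub_ext_af; eauto. intros; apply Es; auto. }
    assert (EU : psub s1 u = ren rho u).
    { rewrite ren_psub_var. eapply psub_ext_af; eauto. intros; apply Es; auto. }
    assert (EV : psub s1' (dsubst D s u) = ren rho (dsubst D s u)).
    { rewrite ren_psub_var. eapply psub_ext_af. apply allfree_dsubst; eauto. intros; apply Es; auto. }
    rewrite EF, EU, S0, EV, ren_ans, ren_dsubst.
    exists (S (nF + nu + w')); split.
    + apply PCopy; auto.
      * apply nl_lren; auto.
      * rewrite <- ren_ans. eapply allfree_ren; eauto.
      * eapply allfree_ren; eauto.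
      * rewrite <- ren_ans. apply bnd_ren; auto.
      * apply bnd_ren; auto.
    + intros Z. rewrite HZ; auto. intros [|n]; simpl; auto.
Qed.

Lemma P_shift1 : forall I b b' wb x, P I b b' wb -> P (bcons x I) (shift 1 0 b) (shift 1 0 b') wb.
Proof. intros; rewrite !shift1; eapply P_ren; eauto. Qed.

Lemma P_subst0 : forall I c c' wc v v' wv, P (bcons false I) c c' wc -> P I v v' wv ->
  exists w, P I (subst 0 v c) (subst 0 v' c') w /\ (wv = 0 -> w = wc).
Proof.
  intros. rewrite !subst0.
  destruct (P_psub _ _ _ _ H I (scons v Var) (scons v' Var) (fun n => match n with 0 => wv | _ => 0 end))
    as [w [Hw HZ]].
  - intros [|n]; simpl; intros Hn; [discriminate | exists n; auto].
  - intros [|n]; simpl; intros Hn; auto. constructor.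
  - exists w; split; auto. intros Z; apply HZ. intros [|n]; simpl; auto.
Qed.

Lemma P3 : forall D0 I p X w, P I (lplug D0 (Lam p)) X w ->
  exists D0' p', X = lplug D0' (Lam p') /\
    forall b b' wb, P I b b' wb -> exists w', P I (dsubst D0 p b) (dsubst D0' p' b') w'.
Proof.
  induction D0; intros I p X w H; simpl in H.
  - inversion H; subst. exists LHole, a'; split; auto.
    intros b b' wb Hb. unfold dsubst; simpl. rewrite !shift0.
    match goal with HH : P (bcons false I) p _ _ |- _ =>
      destruct (P_subst0 _ _ _ _ _ _ _ HH Hb) as [w' [Hw _]] end; eauto.
  - inversion H; subst.
    + match goal with HH : P (bcons false I) (lplug D0 (Lam p)) _ _ |- _ =>
        destruct (IHD0 _ _ _ _ HH) as [D1' [p1' [E Hr]]] end; subst.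
      exists (LApp a' b' D1'), p1'; split; auto.
      intros b b2 wb Hb. rewrite !E1.
      destruct (Hr _ _ _ (P_shift1 _ _ _ _ false Hb)) as [wq Hwq].
      eexists; constructor; eauto.
    + match goal with HH : P (bcons true I) (lplug D0 (Lam p)) _ _ |- _ =>
        destruct (IHD0 _ _ _ _ HH) as [D1' [p1' [E Hr]]] end; subst.
      exists (LApp a' b' D1'), p1'; split; auto.
      intros b b2 wb Hb. rewrite !E1.
      destruct (Hr _ _ _ (P_shift1 _ _ _ _ true Hb)) as [wq Hwq].
      eexists; apply PAppN; eauto.
    + match goal with HH : P (bcons false I) (lplug D0 (Lam p)) _ _ |- _ =>
        destruct (IHD0 _ _ _ _ HH) as [D1' [p1' [E Hr]]] end; subst.
      set (Vc := dsubst D s t0).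
      exists (lps (scons Vc Var) D1'), (psub (upsn (S (ldepth D1')) (scons Vc Var)) p1').
      split.
      * rewrite subst0, psub_ans. reflexivity.
      * intros b b2 wb Hb. rewrite E1.
        destruct (Hr _ _ _ (P_shift1 _ _ _ _ false Hb)) as [wq Hwq].
        replace (dsubst (lps (scons Vc Var) D1') (psub (upsn (S (ldepth D1')) (scons Vc Var)) p1') b2)
          with (subst 0 Vc (dsubst D1' p1' (shift 1 0 b2))).
        -- eexists; apply PCopy; eauto.
        -- rewrite subst0, DS, shift1, cancel. reflexivity.
Qed.

Lemma step_F : forall D s F2, neutral_lctx D -> step (lplug D (Lam s)) F2 ->
  exists D2 s2, F2 = lplug D2 (Lam s2) /\ neutral_lctx D2 /\ forall u, step (dsubst D s u) (dsubst D2 s2 u).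
Proof.
  intros D s F2 HD Hs. destruct (Lstep _ _ _ HD Hs) as [[D2 [S1 E]] | [X2 [S1 E]]]; subst.
  - exists D2, s; repeat split; auto.
    + eapply lstep_nl; eauto.
    + intros u; unfold dsubst. rewrite (lstep_depth _ _ S1). apply lstep_plug; auto.
  - inversion S1; subst. exists D, t'; repeat split; auto.
    intros u; unfold dsubst. apply step_lplug. rewrite !subst0. apply step_psub; auto.
Qed.

Lemma star_subst0 : forall r v v', star v v' -> star (subst 0 v r) (subst 0 v' r).
Proof.
  intros. rewrite !subst0. apply star_psub_arg. intros [|n]; simpl; auto. constructor.
Qed.

Lemma star_dsubst_u : forall D s u u', step u u' -> star (dsubst D s u) (dsubst D s u').
Proof.
  intros. unfold dsubst. apply (star_ctx (lplug D)). { intros; apply step_lplug; auto. }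
  apply star_subst0. apply star_one. rewrite !shift_ren. apply step_ren; auto.
Qed.

Lemma P1 : forall I a a' w, P I a a' w -> forall a2, step a a2 ->
  exists a2' w2, P I a2 a2' w2 /\ (plus a' a2' \/ (a' = a2' /\ w2 < w)).
Proof.
  induction 1; intros a2 Hs.
  - inversion Hs.
  - inversion Hs; subst. destruct (IHP _ H1) as [x [w2 [Hx [Hp | [Eq Hl]]]]].
    + exists (Lam x), w2; split; [constructor; auto|]. left. apply (plus_ctx Lam); auto. intros; constructor; auto.
    + subst. exists (Lam x), w2; split; [constructor; auto|]. right; auto.
  - inversion Hs; subst.
    + destruct (P3 _ _ _ _ _ H) as [D0' [p' [E Hr]]]; subst.
      destruct (Hr _ _ _ H0) as [wv Hwv].
      destruct (P_subst0 _ _ _ _ _ _ _ H1 Hwv) as [w' [Hw' _]].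
      exists (subst 0 (dsubst D0' p' b') c'), w'; split; auto. left; apply pl1; apply step_dbeta.
    + destruct (IHP1 _ H6) as [x [w' [Hx [Hp | [Eq Hl]]]]].
      * exists (App x b' c'), (w' + w2 + w3); split; [constructor; auto|]. left.
        apply (plus_ctx (fun y => App y b' c')); auto. intros; constructor; auto.
      * subst. exists (App x b' c'), (w' + w2 + w3); split; [constructor; auto|]. right; split; auto; lia.
    + destruct (IHP2 _ H6) as [x [w' [Hx [Hp | [Eq Hl]]]]].
      * exists (App a' x c'), (w1 + w' + w3); split; [constructor; auto|]. left.
        apply (plus_ctx (fun y => App a' y c')); auto. intros; constructor; auto.
      * subst. exists (App a' x c'), (w1 + w' + w3); split; [constructor; auto|]. right; split; auto; lia.
    + destruct (IHP3 _ H6) as [x [w' [Hx [Hp | [Eq Hl]]]]].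
      * exists (App a' b' x), (w1 + w2 + w'); split; [constructor; auto|]. left.
        apply (plus_ctx (fun y => App a' b' y)); auto. intros; constructor; auto.
      * subst. exists (App a' b' x), (w1 + w2 + w'); split; [constructor; auto|]. right; split; auto; lia.
  - inversion Hs; subst.
    + exfalso. apply snn_neutral in H. exact (neutral_not_ans _ _ _ H eq_refl).
    + destruct (IHP1 _ H7) as [x [w' [Hx [Hp | [Eq Hl]]]]].
      * exists (App x b' c'), (w' + w2 + w3); split; [apply PAppN; eauto using snn_step|]. left.
        apply (plus_ctx (fun y => App y b' c')); auto. intros; constructor; auto.
      * subst. exists (App x b' c'), (w' + w2 + w3); split; [apply PAppN; eauto using snn_step|]. right; split; auto; lia.
    + destruct (IHP2 _ H7) as [x [w' [Hx [Hp | [Eq Hl]]]]].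
      * exists (App a' x c'), (w1 + w' + w3); split; [apply PAppN; auto|]. left.
        apply (plus_ctx (fun y => App a' y c')); auto. intros; constructor; auto.
      * subst. exists (App a' x c'), (w1 + w' + w3); split; [apply PAppN; auto|]. right; split; auto; lia.
    + destruct (IHP3 _ H7) as [x [w' [Hx [Hp | [Eq Hl]]]]].
      * exists (App a' b' x), (w1 + w2 + w'); split; [apply PAppN; auto|]. left.
        apply (plus_ctx (fun y => App a' b' y)); auto. intros; constructor; auto.
      * subst. exists (App a' b' x), (w1 + w2 + w'); split; [apply PAppN; auto|]. right; split; auto; lia.
  - inversion Hs; subst.
    + match goal with HH : lplug _ (Lam _) = lplug _ (Lam _) |- _ => destruct (ans_inj _ _ _ _ HH) end; subst.
      destruct (P_subst0 _ _ _ _ _ _ _ H4 (P_refl (dsubst D s u) I)) as [w' [Hw' HZ]].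
      exists (subst 0 (dsubst D s u) r'), w'; split; auto. right; split; auto. rewrite HZ; auto; lia.
    + match goal with HH : step (lplug D (Lam s)) _ |- _ => rename HH into Hst0 end.
      destruct (step_F _ _ _ H Hst0) as [D2 [s2 [E [HD2 Hst]]]]; subst.
      destruct (bnd_step _ _ _ H2 Hst0) as [k [Ek Hk]]; subst.
      exists (subst 0 (dsubst D2 s2 u) r'), (S (k + nu + wr)); split.
      * apply PCopy; auto; try (eapply allfree_step; eauto).
      * destruct (star_cases _ _ (star_subst0 r' _ _ (star_one _ _ (Hst u)))) as [Eq | Hp]; auto.
        all: try (right; split; auto; lia).
    + match goal with HH : step u _ |- _ => rename HH into H10 end.
      destruct (bnd_step _ _ _ H3 H10) as [k [Ek Hk]]; subst.
      exists (subst 0 (dsubst D s u') r'), (S (nF + k + wr)); split.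
      * apply PCopy; auto; try (eapply allfree_step; eauto).
      * destruct (star_cases _ _ (star_subst0 r' _ _ (star_dsubst_u D s _ _ H10))) as [Eq | Hp]; auto.
        all: try (right; split; auto; lia).
    + match goal with HH : step r _ |- _ => rename HH into H10 end.
      destruct (IHP _ H10) as [x [w' [Hx [Hp | [Eq Hl]]]]].
      * exists (subst 0 (dsubst D s u) x), (S (nF + nu + w')); split; [apply PCopy; auto|]. left.
        apply (plus_ctx (subst 0 (dsubst D s u))); auto. intros; rewrite !subst0; apply step_psub; auto.
      * subst. exists (subst 0 (dsubst D s u) x), (S (nF + nu + w')); split; [apply PCopy; auto|].
        all: try (right; split; auto; lia).
Qed.

Lemma P_sn : forall T', sn T' -> forall I w T, P I T T' w -> sn T.
Proof.
  intros T' HT. apply sn_acc in HT. induction HT as [T' _ IH].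
  intros I w. induction w as [w IHw] using (well_founded_induction lt_wf).
  intros T HP. constructor. intros T2 Hs.
  destruct (P1 _ _ _ _ HP _ Hs) as [T2' [w2 [HP2 [Hpl | [Eq Hlt]]]]].
  - eapply IH; eauto.
  - subst; eapply IHw; eauto.
Qed.

Lemma sn_lam : forall t, sn t -> sn (Lam t).
Proof.
  induction 1 as [t H IH]. constructor; intros Y HY; inversion HY; subst; auto.
Qed.

Lemma sn_app_neutral : forall n, neutral n -> sn n -> forall u r, sn u -> sn r -> sn (App n u r).
Proof.
  intros n Hn Hsn; revert Hn; induction Hsn as [n Hn0 IHn]; intros Hn u r Hsu.
  revert r; induction Hsu as [u Hu0 IHu]; intros r Hsr.
  induction Hsr as [r Hr0 IHr]. constructor; intros Y HY; inversion HY; subst.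
  - exfalso; exact (neutral_not_ans _ _ _ Hn eq_refl).
  - apply IHn; eauto using neutral_step. constructor; auto. constructor; auto.
  - apply IHu; auto. constructor; auto.
  - apply IHr; auto.
Qed.

Definition rhod (d : nat) : nat -> nat := fun n => if Nat.eqb n 0 then d else if Nat.leb n d then n - 1 else n.

Lemma dopen_eq : forall D s, dopen D s = lplug (lren (shr 1 0) D) (ren (rhod (ldepth D)) s).
Proof.
  intros; unfold dopen. rewrite lshift_lren. f_equal.
  rewrite subst_psub, shift_ren, psub_ren, ren_psub_var. apply psub_ext; intros n.
  unfold rhod; ncase.
Qed.

Lemma dopen_step_back : forall D s Y, neutral_lctx D -> step (dopen D s) Y ->
  exists D2 s2, Y = dopen D2 s2 /\ neutral_lctx D2 /\ step (lplug D (Lam s)) (lplug D2 (Lam s2)).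
Proof.
  intros D s Y HD H. rewrite dopen_eq in H.
  destruct (Lstep _ _ _ (nl_lren _ _ HD) H) as [[D3 [S1 E]] | [X2 [S1 E]]]; subst.
  - destruct (lstep_ren_inv _ _ _ S1) as [D2 [S2 E]]; subst.
    exists D2, s; repeat split.
    + rewrite dopen_eq, (lstep_depth _ _ S2); reflexivity.
    + eapply lstep_nl; eauto.
    + apply lstep_plug; auto.
  - destruct (step_ren_inv _ _ _ S1) as [s2 [S2 E]]; subst.
    exists D, s2; repeat split; auto.
    + rewrite dopen_eq; reflexivity.
    + apply step_lplug; constructor; auto.
Qed.

Lemma dopen_step_fwd : forall D s Y, neutral_lctx D -> step (lplug D (Lam s)) Y ->
  exists D2 s2, Y = lplug D2 (Lam s2) /\ neutral_lctx D2 /\ step (dopen D s) (dopen D2 s2).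
Proof.
  intros D s Y HD H.
  destruct (Lstep _ _ _ HD H) as [[D2 [S1 E]] | [X2 [S1 E]]]; subst.
  - exists D2, s; repeat split.
    + eapply lstep_nl; eauto.
    + rewrite !dopen_eq, (lstep_depth _ _ S1). apply lstep_plug, lstep_ren; auto.
  - inversion S1; subst. exists D, t'; repeat split; auto.
    rewrite !dopen_eq. apply step_lplug, step_ren; auto.
Qed.

Lemma bnd_dopen : forall n D s, neutral_lctx D -> bnd n (lplug D (Lam s)) -> bnd n (dopen D s).
Proof.
  induction n; intros D s HD H; simpl in *; intros Y HY;
  destruct (dopen_step_back _ _ _ HD HY) as [D2 [s2 [E [HD2 Hs]]]]; subst.
  - eapply H; eauto.
  - apply IHn; auto.
Qed.

Lemma sn_dopen_inv : forall t, sn t -> forall D s, t = dopen D s -> neutral_lctx D -> sn (lplug D (Lam s)).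
Proof.
  induction 1 as [t H IH]. intros D s E HD; subst. constructor; intros Y HY.
  destruct (dopen_step_fwd _ _ _ HD HY) as [D2 [s2 [E [HD2 Hs]]]]; subst.
  eapply IH; eauto.
Qed.

Fixpoint ansd (t : term) : option (lctx * term) :=
  match t with
  | Lam s => Some (LHole, s)
  | App a b c => match ansd c with Some (D, s) => Some (LApp a b D, s) | None => None end
  | Var _ => None
  end.

Lemma ansd_lplug : forall D s, ansd (lplug D (Lam s)) = Some (D, s).
Proof. induction D; intros; simpl; auto. rewrite IHD; auto. Qed.

Fixpoint reducts (t : term) : list term :=
  match t with
  | Var _ => nil
  | Lam a => map Lam (reducts a)
  | App a b c => map (fun x => App x b c) (reducts a) ++ map (fun x => App a x c) (reducts b)
      ++ map (fun x => App a b x) (reducts c)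
      ++ match ansd a with Some (D, s) => subst 0 (dsubst D s b) c :: nil | None => nil end
  end.

Lemma step_reducts : forall t t', step t t' -> In t' (reducts t).
Proof.
  induction 1; simpl; rewrite ?in_app_iff.
  - rewrite ansd_lplug. right; right; right; simpl; auto.
  - apply (in_map Lam); auto.
  - left; apply (in_map (fun x => App x u r)); auto.
  - right; left; apply (in_map (fun x => App t x r)); auto.
  - right; right; left; apply (in_map (fun x => App t u x)); auto.
Qed.

Lemma list_bound : forall (L : list term) (Q : term -> Prop),
  (forall x, In x L -> Q x -> exists n, bnd n x) -> exists N, forall x, In x L -> Q x -> bnd N x.
Proof.
  induction L; intros Q H.
  - exists 0; intros x [].
  - destruct (IHL Q) as [N HN]. { intros; apply H; simpl; auto. }
    destruct (classic (Q a)) as [Qa | nQa].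
    + destruct (H a (or_introl eq_refl) Qa) as [m Hm].
      exists (max N m); intros x [E | Hx] Hq; subst.
      * eapply bnd_le; [|eauto]; lia.
      * eapply bnd_le; [|eauto]; lia.
    + exists N; intros x [E | Hx] Hq; subst; auto. contradiction.
Qed.

Lemma sn_bnd : forall t, sn t -> exists n, bnd n t.
Proof.
  induction 1 as [t H IH].
  destruct (list_bound (reducts t) (step t)) as [N HN]. { intros; apply IH; auto. }
  exists (S N); simpl; intros t' Hs. apply HN; auto. apply step_reducts; auto.
Qed.

Lemma P_build : forall W, weak_head W -> forall I D s u r nF nu, (forall i, I i = true) -> neutral_lctx D ->
  bnd nF (lplug D (Lam s)) -> bnd nu u ->
  exists w, P I (wplug W (App (lplug D (Lam s)) u r)) (wplug W (subst 0 (dsubst D s u) r)) w.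
Proof.
  induction 1; intros I D s u1 r1 nF nu HI HD HF Hu; simpl.
  - exists (S (nF + nu + 0)); apply PCopy; auto using allfree_true, P_refl.
  - destruct (IHweak_head I D s u1 r1 nF nu) as [w Hw]; auto.
    eexists; apply PApp; eauto using P_refl.
  - destruct (IHweak_head (bcons true I) D s u1 r1 nF nu) as [w Hw]; auto.
    { intros [|i]; simpl; auto. }
    eexists; apply PAppN; eauto using P_refl. apply neutral_snn; auto.
Qed.

Lemma ISN_sn : forall t, ISN t -> sn t.
Proof.
  induction 1.
  - constructor; intros Y HY; inversion HY.
  - apply sn_lam; auto.
  - apply sn_app_neutral; auto.
  - assert (HF : sn (lplug D (Lam s))) by (apply (sn_dopen_inv _ IHISN2 D s eq_refl); auto).
    destruct (sn_bnd _ HF) as [nF HnF]. destruct (sn_bnd _ IHISN3) as [nu Hnu].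
    destruct (P_build W H (fun _ => true) D s u r nF nu) as [w Hw]; auto.
    exact (P_sn _ IHISN1 _ _ _ Hw).
Qed.

Fixpoint size (t : term) : nat :=
  match t with Var _ => 1 | Lam a => S (size a) | App a b c => S (size a + size b + size c) end.
Fixpoint lsize (D : lctx) : nat :=
  match D with LHole => 0 | LApp t u D' => S (size t + size u + lsize D') end.

Lemma size_ren : forall t r, size (ren r t) = size t.
Proof. induction t; intros; simpl; auto. Qed.
Lemma lsize_lren : forall D r, lsize (lren r D) = lsize D.
Proof. induction D; intros; simpl; auto. rewrite !size_ren, IHD; auto. Qed.
Lemma size_lplug : forall D X, size (lplug D X) = lsize D + size X.
Proof. induction D; intros; simpl; auto. rewrite IHD; lia. Qed.
Lemma size_dopen : forall D s, size (dopen D s) = lsize D + size s.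
Proof. intros; rewrite dopen_eq, size_lplug, lsize_lren, size_ren; auto. Qed.
Lemma size_wplug : forall W X, size X <= size (wplug W X).
Proof. induction W; intros; simpl; auto; specialize (IHW X); lia. Qed.

Lemma answer_decomp : forall t, answer t -> exists D s, neutral_lctx D /\ t = lplug D (Lam s).
Proof.
  induction 1.
  - exists LHole, t; split; auto; constructor.
  - destruct IHanswer as [D [s [HD E]]]; subst. exists (LApp n u D), s; split; auto; constructor; auto.
Qed.

Lemma decomp : forall t, neutral t \/ answer t \/
  exists W D s u r, weak_head W /\ neutral_lctx D /\ t = wplug W (App (lplug D (Lam s)) u r).
Proof.
  induction t.
  - left; constructor.
  - right; left; constructor.
  - destruct IHt1 as [N1 | [A1 | [W [D [s [u [r [HW [HD E]]]]]]]]].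
    + destruct IHt3 as [N3 | [A3 | [W [D [s [u [r [HW [HD E]]]]]]]]].
      * left; constructor; auto.
      * right; left; constructor; auto.
      * right; right; exists (WRight t1 t2 W), D, s, u, r; subst; repeat split; auto; constructor; auto.
    + destruct (answer_decomp _ A1) as [D [s [HD E]]]; subst.
      right; right; exists WHole, D, s, t2, t3; repeat split; auto; constructor.
    + right; right; exists (WLeft W t2 t3), D, s, u, r; subst; repeat split; auto; constructor; auto.
Qed.

Lemma bnd_wplug : forall W n X, bnd n (wplug W X) -> bnd n X.
Proof.
  induction W; intros n X H; simpl in H; auto.
  - apply IHW. eapply (bnd_ctx (fun x => App x t t0)); eauto. intros; constructor; auto.
  - apply IHW. eapply (bnd_ctx (fun x => App t t0 x)); eauto. intros; constructor; auto.
Qed.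

Lemma step_wplug : forall W X X', step X X' -> step (wplug W X) (wplug W X').
Proof. induction W; intros; simpl; auto; constructor; auto. Qed.

Lemma bnd_ISN : forall n t, bnd n t -> ISN t.
Proof.
  induction n as [n IHn] using (well_founded_induction lt_wf).
  assert (Hk : forall k t, size t <= k -> bnd n t -> ISN t).
  { induction k; intros t Hs Hb.
    - destruct t; simpl in Hs; lia.
    - destruct t as [x | a | a b c].
      + constructor.
      + constructor. apply IHk; simpl in Hs; [lia|].
        eapply (bnd_ctx Lam); eauto. intros; constructor; auto.
      + assert (Ha : bnd n a) by (eapply (bnd_ctx (fun x => App x b c)); eauto; intros; constructor; auto).
        assert (Hb' : bnd n b) by (eapply (bnd_ctx (fun x => App a x c)); eauto; intros; constructor; auto).
        assert (Hc : bnd n c) by (eapply (bnd_ctx (fun x => App a b x)); eauto; intros; constructor; auto).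
        simpl in Hs.
        destruct (decomp (App a b c)) as [N | [A | [W [D [s [u [r [HW [HD E]]]]]]]]].
        * inversion N; subst. apply snapp; auto; apply IHk; auto; lia.
        * inversion A; subst. apply snapp; auto; apply IHk; auto; lia.
        * assert (HT : size (wplug W (App (lplug D (Lam s)) u r)) <= S k) by (rewrite <- E; simpl; lia).
          pose proof (size_wplug W (App (lplug D (Lam s)) u r)) as HW2.
          simpl in HW2. rewrite size_lplug in HW2. simpl in HW2.
          assert (HbT : bnd n (wplug W (App (lplug D (Lam s)) u r))) by (rewrite <- E; auto).
          assert (HbR := bnd_wplug _ _ _ HbT).
          rewrite E. apply snbeta; auto.
          -- destruct (bnd_step _ _ _ HbT (step_wplug W _ _ (step_dbeta D s u r))) as [m [Em Hm]].
             subst. apply (IHn m); auto.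
          -- apply IHk. rewrite size_dopen; lia.
             apply bnd_dopen; auto. eapply (bnd_ctx (fun x => App x u r)); eauto. intros; constructor; auto.
          -- apply IHk; [lia|]. eapply (bnd_ctx (fun x => App (lplug D (Lam s)) x r)); eauto.
             intros; constructor; auto. }
  intros t Hb. eapply Hk; eauto.
Qed.

Lemma sn_SN : forall t, sn t -> SN t.
Proof.
  intros t Hsn [f [E Hf]]. assert (forall k, sn (f k) -> False).
  { intros k Hk. remember (f k) as x. revert k Heqx. induction Hk as [x H IH]; intros k E'; subst.
    eapply IH; eauto. }
  apply (H 0); rewrite E; auto.
Qed.

Lemma SN_sn : forall t, SN t -> sn t.
Proof.
  intros t H. apply NNPP; intros Hn. apply H.
  assert (Hex : forall x, ~ sn x -> exists y, step x y /\ ~ sn y).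
  { intros x Hx. apply NNPP; intros Hc. apply Hx; constructor; intros y Hy.
    apply NNPP; intros Hy'. apply Hc; eauto. }
  set (next := fun p : {x | ~ sn x} =>
    let (y, Hy) := constructive_indefinite_description _ (Hex (proj1_sig p) (proj2_sig p)) in
    exist (fun x => ~ sn x) y (proj2 Hy)).
  exists (fun n => proj1_sig (Nat.iter n next (exist _ t Hn))). split; auto.
  intros n. simpl. destruct (Nat.iter n next (exist _ t Hn)) as [x Hx]. simpl.
  unfold next; simpl. destruct (constructive_indefinite_description _ _) as [y [Hy1 Hy2]]; simpl; auto.
Qed.

Theorem mainTheorem6 : forall t : term, SN t <-> ISN t.
Proof.
  intros t; split; intros H.
  - destruct (sn_bnd _ (SN_sn _ H)) as [n Hn]. eapply bnd_ISN; eauto.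
  - apply sn_SN, ISN_sn; auto.
Qed.
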